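(* Let $k\geq0$ and choose one representative $u$ in each orbit $[u]\in[n]^{k+1}/\mathbb{Z}_{k+1}$. Then the set $B=\bigsqcup_{[u]\in[n]^{k+1}/\mathbb{Z}_{k+1}}B_{[u]}$, where \[ B_{[u]}=\{(I-R)e_v=e_v-e_{Rv}\,:\,v\in[u]\setminus\{u\}\}, \] is a basis of $\mathrm{ran}\big((I-R)|_{(\mathbb{C}^n)^{\otimes(k+1)}}\big)$. Consequently, the set $\widetilde B=\bigsqcup_{[u]\in[n]^{k+1}/\mathbb{Z}_{k+1}}\widetilde B_{[u]}$, where \[ \widetilde B_{[u]}=\Big\{\big(\delta_{j,i_1}e_{i_2\cdots i_{k+1}}-2\delta_{j,i_{k+1}}e_{i_1\cdots i_k}+\delta_{j,i_k}e_{i_{k+1}i_1\cdots i_{k-1}}\big)_{1\leq j\leq n}\ :\ i_1i_2\cdots i_{k+1}\in[u]\setminus\{u\}\Big\}, \] is a basis of $\mathcal{X}^{(n)}_k$.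
   Context: Let $\{e_1,\dots,e_n\}$ be an orthonormal basis of $\mathbb{C}^n$. For a word $w=i_1\cdots i_p$ over $[n]=\{1,\dots,n\}$, $e_w=e_{i_1}\otimes\cdots\otimes e_{i_p}\in(\mathbb{C}^n)^{\otimes p}$ (and $e_\epsilon=1$ the vacuum vector of the full Fock space $\mathcal{F}(\mathbb{C}^n)=\mathbb{C}1\oplus\bigoplus_{p\geq1}(\mathbb{C}^n)^{\otimes p}$); $[n]^p$ is the set of words of length $p$. $R$ denotes the cyclic rotation, both on words, $R(i_1\cdots i_{p-1}i_p)=i_pi_1\cdots i_{p-1}$, and on tensors, $R e_{i_1\cdots i_p}=e_{i_pi_1\cdots i_{p-1}}$ (extended linearly); $I$ is the identity. The group $\mathbb{Z}_{k+1}=\mathbb{Z}/(k+1)\mathbb{Z}$ acts on $[n]^{k+1}$ through $R$; $[u]$ is the orbit of $u$ and $[n]^{k+1}/\mathbb{Z}_{k+1}$ the set of orbits. Let $l_je_w=e_{jw}$ and $r_je_w=e_{wj}$ be the left and right creation operators on $\mathcal{F}(\mathbb{C}^n)$. For $k\geq1$, $\mathcal{X}^{(n)}_k=\{((l_j^*-r_j^* )\xi)_{j=1}^n:\xi\in(\mathbb{C}^n)^{\otimes(k+1)}\}\subset[(\mathbb{C}^n)^{\otimes k}]^n$, and $\mathcal{X}^{(n)}_0=\{0\}$. $\delta_{j,i}$ is the Kronecker delta. *)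

(* Defs.v *)
From HB Require Import structures.
From mathcomp Require Import all_boot all_order all_algebra.
From mathcomp Require Import complex.
From mathcomp Require Import Rstruct.
Set Implicit Arguments. Unset Strict Implicit. Unset Printing Implicit Defensive.
Import GRing.Theory Num.Theory.
Local Open Scope ring_scope.

Definition C : fieldType := (Rdefinitions.R)[i].

(* words of length p over [n] = {0,..,n-1} (letters 1..n shifted by one) *)
Definition word (n p : nat) := p.-tuple 'I_n.

(* (C^n)^{\otimes p}: coordinates in the orthonormal basis (e_w)_{w in [n]^p};
   for p = 0 this is C (the vacuum level) *)
Definition tensor (n p : nat) := {ffun p.-tuple 'I_n -> C^o}.

Definition e (n p : nat) (w : p.-tuple 'I_n) : tensor n p :=
  [ffun x => (x == w)%:R].

(* cyclic rotation on words: R(i_1 ... i_{p-1} i_p) = i_p i_1 ... i_{p-1} *)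
Definition Rw (n p : nat) (w : p.-tuple 'I_n) : p.-tuple 'I_n := rotr_tuple 1 w.

Definition Rop (n p : nat) (xi : tensor n p) : tensor n p :=
  \sum_(v : p.-tuple 'I_n) xi v *: e (Rw v).

Definition IminusR (n p : nat) : 'End(tensor n p) :=
  linfun (fun xi : tensor n p => xi - Rop xi).

(* adjoints of the creation operators, restricted to level p+1 -> p:
   l_j^* e_{i_1...i_{p+1}} = delta_{j,i_1} e_{i_2...i_{p+1}},
   r_j^* e_{i_1...i_{p+1}} = delta_{j,i_{p+1}} e_{i_1...i_p};
   written coordinatewise. *)
Definition rcons_tuple (n p : nat) (w : p.-tuple 'I_n) (j : 'I_n) : p.+1.-tuple 'I_n :=
  @Tuple p.+1 _ (rcons w j) (introT eqP (etrans (size_rcons w j) (f_equal S (size_tuple w)))).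

Definition lstar (n p : nat) (j : 'I_n) (xi : tensor n p.+1) : tensor n p :=
  [ffun w : p.-tuple 'I_n => xi (cons_tuple j w)].
Definition rstar (n p : nat) (j : 'I_n) (xi : tensor n p.+1) : tensor n p :=
  [ffun w : p.-tuple 'I_n => xi (rcons_tuple w j)].

Definition Xmap (n k : nat) (xi : tensor n k.+1) : {ffun 'I_n -> tensor n k} :=
  [ffun j => lstar j xi - rstar j xi].

Definition Xspace (n k : nat) : {vspace {ffun 'I_n -> tensor n k}} :=
  if k is 0 then 0%VS else limg (linfun (@Xmap n k)).

Definition same_orbit (n p : nat) (u v : p.-tuple 'I_n) : Prop :=
  exists m : nat, v = iter m (@Rw n p) u.

(* the words v with v in [u] \ {u}, u the chosen representative of the orbit
   of v; rep w is the chosen representative of the orbit [w] *)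
Definition nonrep (n p : nat) (rep : p.-tuple 'I_n -> p.-tuple 'I_n)
  : seq (p.-tuple 'I_n) :=
  [seq v <- enum {: p.-tuple 'I_n} | v != rep v].

Definition Bvec (n p : nat) (v : p.-tuple 'I_n) : tensor n p := e v - e (Rw v).

(* for v = i_1 ... i_{k+1}:  i_2 ... i_{k+1},  i_1 ... i_k,  i_{k+1} i_1 ... i_{k-1} *)
Definition tailw (n k : nat) (v : k.+1.-tuple 'I_n) : k.-tuple 'I_n :=
  [tuple tnth v (lift ord0 i) | i < k].
Definition initw (n k : nat) (v : k.+1.-tuple 'I_n) : k.-tuple 'I_n :=
  [tuple tnth v (widen_ord (leqnSn k) i) | i < k].
Definition cycw (n k : nat) (v : k.+1.-tuple 'I_n) : k.-tuple 'I_n :=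
  [tuple (if (i : nat) == 0%N then tnth v ord_max else tnth v (inord i.-1)) | i < k].

Definition Btil (n k : nat) (v : k.+1.-tuple 'I_n) : {ffun 'I_n -> tensor n k} :=
  [ffun j => (j == tnth v ord0)%:R *: e (tailw v)
             - (2 * (j == tnth v ord_max)%:R) *: e (initw v)
             + (j == tnth v (inord k.-1))%:R *: e (cycw v)].

(* sanity: the maps fed to linfun are linear, so linfun agrees with them *)
Lemma Rop_linear (n p : nat) : linear (@Rop n p).
Proof.
move=> a x y; rewrite /Rop scaler_sumr -big_split /=; apply: eq_bigr => v _.
by rewrite !ffunE scalerDl scalerA.
Qed.

Lemma IminusR_linear (n p : nat) : linear (fun xi : tensor n p => xi - Rop xi).
Proof.
move=> a x y; rewrite (Rop_linear a x y) scalerBr opprD addrACA.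
by [].
Qed.

Lemma Xmap_linear (n k : nat) : linear (@Xmap n k).
Proof.
move=> a x y; apply/ffunP => j; rewrite !ffunE.
apply/ffunP => w; rewrite !ffunE /=.
by rewrite scalerBr opprD addrACA.
Qed.

(* Main.v *)
Require Import Defs.
From HB Require Import structures.
From mathcomp Require Import all_boot all_order all_algebra.
From mathcomp Require Import complex.
From mathcomp Require Import Rstruct.
From mathcomp Require Import ring zify.
Import GRing.Theory Num.Theory.
Local Open Scope ring_scope.
Section Basic.
Variables (n p : nat).
Local Notation T := (p.-tuple 'I_n).

Lemma Rw_inj : injective (@Rw n p).
Proof. by move=> x y /(congr1 val) /= /rotr_inj /val_inj. Qed.

Lemma eE (w x : T) : e w x = (x == w)%:R.
Proof. by rewrite ffunE. Qed.

Lemma RopE (xi : tensor n p) (y : T) : Rop xi (Rw y) = xi y.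
Proof.
rewrite /Rop sum_ffunE (bigD1 y) //= big1 ?addr0.
  by rewrite !ffunE eqxx; exact: mulr1.
by move=> v nv; rewrite !ffunE (inj_eq Rw_inj) eq_sym (negbTE nv); exact: mulr0.
Qed.

Lemma Rop_e (v : T) : Rop (e v) = e (Rw v).
Proof.
apply/ffunP=> x; rewrite /Rop sum_ffunE (bigD1 v) //= big1 ?addr0.
  by rewrite !ffunE eqxx; exact: mul1r.
by move=> u nu; rewrite !ffunE (negbTE nu); exact: mul0r.
Qed.

Definition imr (xi : tensor n p) := xi - Rop xi.
HB.instance Definition _ := GRing.isLinear.Build C (tensor n p) (tensor n p) _ imr
  (@IminusR_linear n p).

Lemma IminusRE xi : IminusR n p xi = xi - Rop xi.
Proof. by rewrite /IminusR (lfunE (imr : {linear _ -> _})). Qed.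

Lemma IminusR_e v : IminusR n p (e v) = Bvec v.
Proof. by rewrite IminusRE Rop_e. Qed.

Lemma iter_sum (y : T) m :
  \sum_(i < m) Bvec (iter i (@Rw n p) y) = e y - e (iter m (@Rw n p) y).
Proof.
elim: m => [|m IH]; first by rewrite big_ord0 subrr.
by rewrite big_ord_recr /= IH /Bvec addrA subrK.
Qed.

Lemma iter_ne (y : T) i : (0 < i < order (@Rw n p) y)%N -> iter i (@Rw n p) y != y.
Proof.
case/andP=> i0 iN; apply/eqP=> E.
have := findex_iter iN; rewrite E findex0 => E0.
by rewrite -E0 in i0.
Qed.

End Basic.
Arguments iter_sum {n p}. Arguments iter_ne {n p}. Arguments IminusR_e {n p}.
Arguments RopE {n p}. Arguments Rop_e {n p}. Arguments eE {n p}. Arguments IminusRE {n p}.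
Section Part1.
Variables (n p : nat) (rep : p.-tuple 'I_n -> p.-tuple 'I_n).
Hypothesis rep_in_orbit : forall w, same_orbit w (rep w).
Hypothesis rep_const : forall w w', same_orbit w w' -> rep w = rep w'.
Local Notation T := (p.-tuple 'I_n).
Local Notation R := (@Rw n p).

Lemma rep_iter y i : rep (iter i R y) = rep y.
Proof. by symmetry; apply: rep_const; exists i. Qed.

Lemma rep_idem y : rep (rep y) = rep y.
Proof. by symmetry; apply: rep_const. Qed.

Lemma mem_nonrep v : (v \in nonrep rep) = (v != rep v).
Proof. by rewrite mem_filter mem_enum andbT. Qed.

Lemma Bvec_span y : Bvec y \in <<[seq Bvec v | v <- nonrep rep]>>%VS.
Proof.
case: (boolP (y == rep y)) => [/eqP Ey | ny]; last first.
  by apply: memv_span; apply: map_f; rewrite mem_nonrep.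
have := iter_sum y (order R y).
rewrite (iter_order (@Rw_inj n p)) subrr.
have := order_gt0 R y; case: (order R y) (iter_ne y) => // N HN _.
rewrite big_ord_recl => /eqP; rewrite addr_eq0 => /eqP ->.
rewrite rpredN rpred_sum // => i _.
apply: memv_span; apply: map_f; rewrite mem_nonrep rep_iter -Ey.
apply: HN; rewrite lift0 /=; exact: ltn_ord.
Qed.

Lemma ran_sub : (limg (IminusR n p) <= <<[seq Bvec v | v <- nonrep rep]>>)%VS.
Proof.
apply/subvP => x /memv_imgP [eta _ ->].
have -> : eta = \sum_(y : T) eta y *: e y.
  apply/ffunP => x'; rewrite sum_ffunE (bigD1 x') //= big1 ?addr0.
    by rewrite !ffunE eqxx; symmetry; exact: mulr1.
  by move=> y ny; rewrite !ffunE eq_sym (negbTE ny); exact: mulr0.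
rewrite linear_sum rpred_sum // => y _.
rewrite linearZ rpredZ //; move: (Bvec_span y); rewrite -IminusR_e; apply.
Qed.

Lemma B_sub : (<<[seq Bvec v | v <- nonrep rep]>> <= limg (IminusR n p))%VS.
Proof.
by apply/span_subvP => x /mapP [v _ ->]; rewrite -IminusR_e memv_img // memvf.
Qed.

Lemma B_free : free [seq Bvec v | v <- nonrep rep].
Proof.
have [x0 _|T0] := pickP (@predT T); last first.
  by rewrite /nonrep; case E: (enum _) => [|a l]; [rewrite nil_free | have := T0 a].
set s := nonrep rep.
have us : uniq s by rewrite filter_uniq // enum_uniq.
set B := [seq Bvec v | v <- s].
rewrite -[B]/(tval (in_tuple B)); apply/freeP => kk H i.
have sB : size B = size s by rewrite size_map.
pose c x := \sum_(i < size B) kk i * (x == nth x0 s i)%:R.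
have H' x : c x - \sum_(i < size B) kk i * (x == R (nth x0 s i))%:R = 0.
  have := congr1 (fun f : tensor n p => f x) H; rewrite /= sum_ffunE ffunE => E.
  rewrite -[RHS]E /c -sumrB; apply: eq_bigr => j _.
  rewrite /= (nth_map x0) -?sB // !ffunE.
  exact: (esym (mulrBr _ _ _)).
have cR y : c (R y) = c y.
  apply/eqP; rewrite -subr_eq0 -(H' (R y)); apply/eqP; congr (_ - _).
  by apply: eq_bigr => j _; rewrite (inj_eq (@Rw_inj n p)).
have citer y m : c (iter m R y) = c y by elim: m => //= m <-; rewrite cR.
have c0 y : c y = 0.
  have [m Em] := rep_in_orbit y; rewrite -(citer y m) -Em.
  apply: big1 => j _; case: eqP => [E|]; last by rewrite mulr0.
  have : nth x0 s j \in s by rewrite mem_nth -?sB.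
  by rewrite mem_nonrep -E rep_idem eqxx.
rewrite -(c0 (nth x0 s i)) /c (bigD1 i) //= eqxx mulr1 big1 ?addr0 //.
move=> j nj; rewrite nth_uniq -?sB // (inj_eq val_inj) eq_sym (negbTE nj).
by rewrite mulr0.
Qed.

Lemma part1 : basis_of (limg (IminusR n p)) [seq Bvec v | v <- nonrep rep].
Proof.
by rewrite /basis_of B_free andbT eqEsubv ran_sub B_sub.
Qed.

End Part1.
Section Words.
Variables (n k : nat).

Lemma mktupleE (A : Type) (x0 : A) (f : 'I_k -> A) (s : seq A) :
  size s = k -> (forall i : 'I_k, f i = nth x0 s i) -> tval (mktuple f) = s.
Proof.
move=> ss fs; apply: (@eq_from_nth _ x0); first by rewrite size_tuple ss.
move=> i; rewrite size_tuple => ik.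
by have -> : i = Ordinal ik by []; rewrite nth_mktuple fs.
Qed.

Variable v : k.+1.-tuple 'I_n.

Lemma initwE : val (initw v) = take k v.
Proof.
apply: (@mktupleE _ (tnth v ord0) (fun i => tnth v (widen_ord (leqnSn k) i))); first by rewrite size_takel // size_tuple.
by move=> i; rewrite (tnth_nth (tnth v ord0)) (nth_take _ (ltn_ord i)).
Qed.

Lemma tailwE : val (tailw v) = behead v.
Proof.
apply: (@mktupleE _ (tnth v ord0) (fun i => tnth v (lift ord0 i))); first by rewrite size_behead size_tuple.
by move=> i; rewrite (tnth_nth (tnth v ord0)) nth_behead lift0.
Qed.

Lemma v_cons : val v = tnth v ord0 :: behead v.
Proof.
have x0 : 'I_n := tnth v ord0.
by rewrite (tnth_nth x0); case: v => [[|a s] //].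
Qed.

Lemma v_rcons : val v = rcons (take k v) (tnth v ord_max).
Proof.
have x0 : 'I_n := tnth v ord0.
rewrite (tnth_nth x0) /= -take_nth ?size_tuple //.
by rewrite take_oversize // size_tuple.
Qed.

Lemma RwE : val (Rw v) = tnth v ord_max :: take k v.
Proof. by rewrite /= [in LHS]v_rcons rotr1_rcons. Qed.

Lemma E1 (w : k.-tuple 'I_n) j :
  (cons_tuple j w == v) = (j == tnth v ord0) && (w == tailw v).
Proof.
by rewrite -val_eqE [X in _ == X]v_cons /= eqseq_cons -tailwE val_eqE.
Qed.

Lemma E2 (w : k.-tuple 'I_n) j :
  (cons_tuple j w == Rw v) = (j == tnth v ord_max) && (w == initw v).
Proof.
by rewrite -val_eqE [X in _ == X]RwE /= eqseq_cons -initwE val_eqE.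
Qed.

Lemma E3 (w : k.-tuple 'I_n) j :
  (Defs.rcons_tuple w j == v) = (j == tnth v ord_max) && (w == initw v).
Proof.
by rewrite -val_eqE [X in _ == X]v_rcons /= eqseq_rcons -initwE val_eqE andbC.
Qed.

Lemma W1 (w : k.-tuple 'I_n) j : Rw (Defs.rcons_tuple w j) = cons_tuple j w.
Proof. by apply: val_inj; rewrite /= rotr1_rcons. Qed.

Lemma W2 : v = Defs.rcons_tuple (initw v) (tnth v ord_max).
Proof.
apply: val_inj; transitivity (rcons (val (initw v)) (tnth v ord_max)); last by [].
by rewrite initwE -v_rcons.
Qed.

End Words.

Section Words2.
Variables (n k : nat).
Variable v : k.+2.-tuple 'I_n.

Lemma cycwE : val (cycw v) = tnth v ord_max :: take k v.
Proof.
have x0 : 'I_n := tnth v ord0.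
apply: (@mktupleE _ _ x0 (fun i : 'I_k.+1 => if (i : nat) == 0%N then tnth v ord_max else tnth v (inord i.-1))).
  rewrite /= size_takel // size_tuple; lia.
move=> [[|i] Hi] //=.
rewrite (tnth_nth x0) inordK; last lia.
rewrite nth_take //; lia.
Qed.

Lemma RwE2 : val (Rw v) = rcons (val (cycw v)) (tnth v (inord k)).
Proof.
have x0 : 'I_n := tnth v ord0.
rewrite RwE cycwE rcons_cons (tnth_nth x0 v (inord k)) inordK // -take_nth //.
by rewrite size_tuple.
Qed.

Lemma E4 (w : k.+1.-tuple 'I_n) j :
  (Defs.rcons_tuple w j == Rw v) = (j == tnth v (inord k)) && (w == cycw v).
Proof.
by rewrite -val_eqE [X in _ == X]RwE2 (_ : val (Defs.rcons_tuple w j) = rcons w j) // eqseq_rcons val_eqE andbC.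
Qed.

End Words2.
Arguments W1 {n k}. Arguments W2 {n k}.
Arguments E1 {n k}. Arguments E2 {n k}. Arguments E3 {n k}. Arguments E4 {n k}.

Lemma Btil_eq n k (v : k.+2.-tuple 'I_n) : Btil v = Xmap (Bvec v).
Proof.
apply/ffunP => j; apply/ffunP => w; rewrite !ffunE /=.
rewrite E1 E2 E3 E4 -!mulnb !natrM.
have S (a b : C^o) : a *: b = a * b by [].
rewrite !S; ring.
Qed.

Section Part2.
Variables (n k : nat).

HB.instance Definition _ := GRing.isLinear.Build C (tensor n k.+1)
  {ffun 'I_n -> tensor n k} _ (@Xmap n k) (@Xmap_linear n k).

Lemma XmapE xi : linfun (@Xmap n k) xi = Xmap xi.
Proof. exact: (lfunE (@Xmap n k : {linear _ -> _})). Qed.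

Lemma kerF_sub : (lker (IminusR n k.+1) <= lker (linfun (@Xmap n k)))%VS.
Proof.
apply/subvP => xi; rewrite !memv_ker IminusRE subr_eq0 => /eqP E.
have inv y : xi (Rw y) = xi y by rewrite {1}E RopE.
rewrite XmapE; apply/eqP/ffunP => j; apply/ffunP => w; rewrite !ffunE.
by rewrite -W1 inv subrr.
Qed.

Lemma cap0 : (limg (IminusR n k.+1) :&: lker (linfun (@Xmap n k)) = 0)%VS.
Proof.
apply/eqP; rewrite -subv0; apply/subvP => xi0; rewrite memv_cap memv0.
case/andP => /memv_imgP [eta _ ->]; rewrite memv_ker XmapE => /eqP H.
set xi := IminusR n k.+1 eta.
have inv y : xi (Rw y) = xi y.
  have := congr1 (fun f : {ffun 'I_n -> tensor n k} => f (tnth y ord_max) (initw y)) H.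
  by rewrite !ffunE -W1 -W2 => /eqP; rewrite subr_eq0 => /eqP.
have xiR y : xi (Rw y) = eta (Rw y) - eta y by rewrite /xi IminusRE !ffunE RopE.
have tel y m : \sum_(i < m) xi (iter i.+1 (@Rw n k.+1) y) = eta (iter m (@Rw n k.+1) y) - eta y.
  elim: m => [|m IH]; first by rewrite big_ord0 subrr.
  by rewrite big_ord_recr /= IH xiR; ring.
have inviter y m : xi (iter m (@Rw n k.+1) y) = xi y by elim: m => //= m <-; rewrite inv.
apply/eqP/ffunP => y; rewrite [RHS]ffunE.
have := tel y (order (@Rw n k.+1) y); rewrite iter_order ?subrr; last exact: Rw_inj.
under eq_bigr => i _ do rewrite inviter.
rewrite sumr_const card_ord => /eqP; rewrite mulrn_eq0 => /orP [|/eqP//].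
by rewrite eqn0Ngt order_gt0.
Qed.

End Part2.

Theorem proposition3p7 (n k : nat) (rep : k.+1.-tuple 'I_n -> k.+1.-tuple 'I_n)
  (rep_in_orbit : forall w, same_orbit w (rep w))
  (rep_const : forall w w', same_orbit w w' -> rep w = rep w') :
  basis_of (limg (@IminusR n k.+1)) [seq Bvec v | v <- nonrep rep] /\
  basis_of (Xspace n k) [seq Btil v | v <- nonrep rep].
Proof.
split; first exact: part1.
case: k rep rep_in_orbit rep_const => [|k'] rep H1 H2.
  have R1 (y : 1.-tuple 'I_n) : Rw y = y.
    by apply: val_inj; case: y => [[|a [|b s]] //= Hs].
  have Ri (y : 1.-tuple 'I_n) m : iter m (@Rw n 1) y = y.
    by elim: m => //= m ->; rewrite R1.
  have -> : nonrep rep = [::].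
    rewrite /nonrep (eq_filter (a2 := pred0)) ?filter_pred0 // => v /=.
    by have [m ->] := H1 v; rewrite Ri eqxx.
  by rewrite /basis_of /= span_nil nil_free eqxx.
have /andP [/eqP spanB freeB] := @part1 n k'.+2 rep H1 H2.
set B := [seq Bvec v | v <- nonrep rep] in spanB freeB *.
set X := linfun (@Xmap n k'.+1).
set F := IminusR n k'.+2 in spanB *.
have -> : [seq Btil v | v <- nonrep rep] = map X B.
  by rewrite /B -map_comp; apply: eq_map => v /=; rewrite XmapE Btil_eq.
have dimeq : \dim (X @: limg F) = \dim (limg F).
  by have := limg_ker_dim X (limg F); rewrite cap0 dimv0.
rewrite /basis_of /free -limg_span spanB size_map dimeq.
apply/andP; split; last by move: freeB; rewrite /free spanB.
rewrite /Xspace -/X eqEdim limgS ?subvf //=.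
have h1 := limg_ker_dim X fullv; have h2 := limg_ker_dim F fullv.
have h3 : (\dim (lker F) <= \dim (lker X))%N := dimvS (kerF_sub n k'.+1).
rewrite !capfv in h1 h2.
by rewrite dimeq -(leq_add2l (\dim (lker X))) h1 -h2 leq_add2r.
Qed.
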